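(* Let $\mathcal A$ be a weighted ODCA over $\mathbb F$, $K=|Q|\cdot|C|$, $c$ a configuration with counter value $n$, $V\subseteq\mathbb F^{|Q|}$ a subspace and $S\subseteq C$. If $z$ is a minimal witness for $(c,\overline V,S,\mathbb N)$, then $|z|\le K\cdot(\max(n,K)+K^2)$.
   Context: Fix a field $\mathbb{F}$ and a finite alphabet $\Sigma$. For $n\in\mathbb N$ let $\mathrm{sgn}(n)=0$ if $n=0$ and $1$ if $n>0$. A weighted ODCA is $\mathcal{A}=((C,\delta_0,\delta_1,p_0),(Q,\lambda,\Delta,\eta))$ where $C$ is a finite nonempty set of counter states, $\delta_0:C\times\Sigma\to C\times\{0,+1\}$ and $\delta_1:C\times\Sigma\to C\times\{-1,0,+1\}$ are deterministic counter transition functions, $p_0\in C$, $Q$ is a finite nonempty set of states, $\lambda,\eta\in\mathbb{F}^{|Q|}$, and $\Delta:\Sigma\times\{0,1\}\to\mathbb{F}^{|Q|\times|Q|}$. A configuration is a triple $(x,p,n)\in\mathbb{F}^{|Q|}\times C\times\mathbb{N}$ (weight vector, counter state, counter value). Reading $a\in\Sigma$ from $(x,p,n)$ with $d=\mathrm{sgn}(n)$ and $\delta_d(p,a)=(p',e)$ leads to $(x\Delta(a,d),p',n+e)$; for each word $w$ and configuration $c$ there is a unique run of $w$ from $c$. For a subspace $V\subseteq\mathbb F^{|Q|}$ let $\overline V=\mathbb F^{|Q|}\setminus V$. For $S\subseteq C$ and $X\subseteq\mathbb N$, a word $z$ is a witness for $(c,\overline V,S,X)$ if the run of $z$ from $c$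 ends in a configuration $(x,p,n)$ with $x\in\overline V$, $p\in S$, $n\in X$; it is a minimal witness if no strictly shorter word is a witness. *)

(* Defs.v *)
From HB Require Import structures.
From mathcomp Require Import all_boot all_order all_algebra.
Set Implicit Arguments. Unset Strict Implicit. Unset Printing Implicit Defensive.
Import GRing.Theory.
Local Open Scope ring_scope.

(* Counter effects of delta_1 : -1, 0, +1.  Effects of delta_0 ({0,+1}) are
   encoded by a bool: false = 0, true = +1. *)
Inductive eff := EDec | EStay | EInc.

(* A weighted ODCA: counter part (C, delta0, delta1, p0) over alphabet Sigma,
   weighted part (Q, lambda, Delta, eta) with Q = 'I_q (0 < q). *)
Record wODCA (F : fieldType) (Sigma C : finType) (q : nat) := WODCA {
  delta0 : C -> Sigma -> C * bool;
  delta1 : C -> Sigma -> C * eff;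
  p0 : C;
  lam : 'rV[F]_q;
  Delta : Sigma -> bool -> 'M[F]_q;   (* second argument: sgn(n) = (0 < n) *)
  eta : 'rV[F]_q
}.

Definition config (F : fieldType) (C : finType) (q : nat) :=
  ('rV[F]_q * C * nat)%type.

Definition step (F : fieldType) (Sigma C : finType) (q : nat)
  (A : wODCA F Sigma C q) (c : config F C q) (a : Sigma) : config F C q :=
  let: (x, p, n) := c in
  if n == 0%N then
    let: (p', e) := delta0 A p a in
    (x *m Delta A a false, p', if e then n.+1 else n)
  else
    let: (p', e) := delta1 A p a in
    (x *m Delta A a true, p',
      match e with EDec => n.-1 | EStay => n | EInc => n.+1 end).

Definition run (F : fieldType) (Sigma C : finType) (q : nat)
  (A : wODCA F Sigma C q) (c : config F C q) (w : seq Sigma) : config F C q :=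
  foldl (step A) c w.

Definition witness (F : fieldType) (Sigma C : finType) (q : nat)
  (A : wODCA F Sigma C q) (c : config F C q) (V : {vspace 'rV[F]_q})
  (S : {set C}) (X : pred nat) (z : seq Sigma) : Prop :=
  let: (x, p, n) := run A c z in [/\ x \notin V, p \in S & X n].

Definition minimal_witness (F : fieldType) (Sigma C : finType) (q : nat)
  (A : wODCA F Sigma C q) (c : config F C q) (V : {vspace 'rV[F]_q})
  (S : {set C}) (X : pred nat) (z : seq Sigma) : Prop :=
  witness A c V S X z /\
  forall z' : seq Sigma, (size z' < size z)%N -> ~ witness A c V S X z'.

(* Main.v *)
Require Import Defs.
From mathcomp Require Import all_boot all_order all_algebra.
From HB Require Import structures.
From mathcomp Require Import zify ring.
Set Implicit Arguments. Unset Strict Implicit. Unset Printing Implicit Defensive.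
Import GRing.Theory.


Section GLs.
Local Open Scope ring_scope.
Lemma GL (F : fieldType) (a b q : nat) (V : {vspace 'M[F]_(1,q)}) (ord : rel nat)
  (ordT : transitive ord) (u : nat -> 'M[F]_(1,a)) (e : nat -> 'M[F]_(a,b))
  (r : nat -> 'M[F]_(b,q)) (s : seq nat) :
  sorted ord s ->
  (forall i j, i \in s -> j \in s -> ord i j -> u i *m e j *m r i \in V) ->
  (forall i, i \in s -> u i *m e i *m r i \notin V) ->
  (size s <= a * b)%N.
Proof.
move=> so Hin Hout.
have fr : free (map e s).
  elim: s so Hin Hout => [|i s IH] so Hin Hout; first by rewrite /free span_nil dimv0.
  rewrite /= free_cons; apply/andP; split; last first.
    apply: IH.
    - exact: path_sorted so.
    - by move=> i' j' Hi Hj; apply: Hin; rewrite inE ?Hi ?Hj orbT.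
    - by move=> i' Hi; apply: Hout; rewrite inE Hi orbT.
  have al := order_path_min ordT so.
  pose f := linfun (mulmxr (r i) \o mulmx (u i)) : 'Hom('M[F]_(a,b), 'M[F]_(1,q)).
  have sub : (<<map e s>> <= f @^-1: V)%VS.
    apply/span_subvP => v /mapP [j Hj ->].
    rewrite -memv_preim lfunE /=.
    apply: Hin; rewrite ?inE ?Hj ?eqxx ?orbT //.
    exact: (allP al).
  apply/negP => /(subvP sub); rewrite -memv_preim lfunE /=.
  by apply/negP; apply: Hout; rewrite inE eqxx.
have := dimvS (subvf <<map e s>>); rewrite dimvf.
move: fr; rewrite /free => /eqP ->; rewrite size_map.
by rewrite dim_matrix.
Qed.

End GLs.

Lemma CL (T : finType) (key : nat -> T) (s : seq nat) (B : nat) :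
  (forall k : T, size [seq i <- s | key i == k] <= B) -> size s <= #|T| * B.
Proof.
move=> H.
have -> : size s = \sum_(k : T) size [seq i <- s | key i == k].
  elim: s {H} => [|i s IH]; first by rewrite big1.
  rewrite /= IH.
  have -> : \sum_(k : T) size (if key i == k then i :: [seq j <- s | key j == k]
                               else [seq j <- s | key j == k])
          = \sum_(k : T) ((key i == k) + size [seq j <- s | key j == k]).
    by apply: eq_bigr => k _; case: (key i == k).
  rewrite big_split /=.
  have -> : \sum_(k : T) (key i == k : nat) = 1.
    rewrite (bigD1 (key i)) //= eqxx big1 //.
    by move=> k; rewrite eq_sym => /negbTE ->.
  by rewrite add1n.
rewrite -sum_nat_const; exact: leq_sum.
Qed.

Definition fst (P : pred nat) (N : nat) := find P (iota 0 N.+1).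

Lemma fstP (P : pred nat) N : P N ->
  [/\ fst P N <= N, P (fst P N) & forall k, k < fst P N -> ~~ P k].
Proof.
move=> PN.
have hs : has P (iota 0 N.+1) by apply/hasP; exists N => //; rewrite mem_iota; lia.
have lt : fst P N < N.+1 by rewrite /fst; move: hs; rewrite has_find size_iota.
split => //.
  by have := nth_find 0 hs; rewrite nth_iota.
move=> k kl; have := before_find 0 kl; rewrite nth_iota ?add0n => [->|] //.
by apply: ltn_trans lt.
Qed.

Lemma argmax_ex (f : nat -> nat) N : exists s, s <= N /\ forall i, i <= N -> f i <= f s.
Proof.
elim: N => [|N [s [sN Hs]]]; first by exists 0; split=> // i; rewrite leqn0 => /eqP ->.
case: (leqP (f N.+1) (f s)) => h.
  exists s; split; first by lia.
  move=> i; rewrite leq_eqVlt => /orP [/eqP -> //|]; rewrite ltnS; exact: Hs.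
exists N.+1; split=> // i; rewrite leq_eqVlt => /orP [/eqP -> //|]; rewrite ltnS => /Hs.
by move=> h2; apply: leq_trans h2 (ltnW h).
Qed.

Section Ctl.
Local Open Scope ring_scope.
Variables (F : fieldType) (Sigma C : finType) (q : nat) (A : wODCA F Sigma C q).

Definition cstep (c : C * nat) (a : Sigma) : C * nat :=
  let: (p, n) := c in
  if n == 0%N then let: (p', e) := delta0 A p a in (p', if e then n.+1 else n)
  else let: (p', e) := delta1 A p a in
    (p', match e with EDec => n.-1 | EStay => n | EInc => n.+1 end).

Definition cm (c : C * nat) (a : Sigma) : 'M[F]_q := Delta A a (c.2 != 0%N).

Definition crun c (w : seq Sigma) := foldl cstep c w.

Fixpoint cmat (c : C * nat) (w : seq Sigma) : 'M[F]_q :=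
  match w with [::] => 1%:M | a :: w' => cm c a *m cmat (cstep c a) w' end.

Lemma step_split x p n a :
  step A (x, p, n) a = (x *m cm (p, n) a, (cstep (p, n) a).1, (cstep (p, n) a).2).
Proof.
rewrite /step /cstep /cm /=; case: eqP => [->|_] /=.
  by case: (delta0 A p a) => p' [].
by case: (delta1 A p a) => p' [].
Qed.

Lemma run_split w x p n :
  run A (x, p, n) w = (x *m cmat (p, n) w, (crun (p, n) w).1, (crun (p, n) w).2).
Proof.
elim: w x p n => [|a w IH] x p n; first by rewrite /= mulmx1.
have -> : run A (x, p, n) (a :: w) = run A (step A (x, p, n) a) w by [].
rewrite step_split.
have -> : cmat (p, n) (a :: w) = cm (p, n) a *m cmat (cstep (p, n) a) w by [].
have -> : crun (p, n) (a :: w) = crun (cstep (p, n) a) w by [].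
case E: (cstep (p, n) a) => [p' n'].
by rewrite IH mulmxA.
Qed.

Lemma cmat_cons c a w : cmat c (a :: w) = cm c a *m cmat (cstep c a) w.
Proof. by []. Qed.
Lemma crun_cons c a w : crun c (a :: w) = crun (cstep c a) w.
Proof. by []. Qed.

Lemma cmat_cat c u v : cmat c (u ++ v) = cmat c u *m cmat (crun c u) v.
Proof.
elim: u c => [|a u IH] c /=; first by rewrite mul1mx.
by rewrite IH mulmxA.
Qed.

Lemma crun_cat c u v : crun c (u ++ v) = crun (crun c u) v.
Proof. exact: foldl_cat. Qed.

Lemma cstep_bound c a : ((cstep c a).2 <= c.2.+1)%N /\ (c.2 <= (cstep c a).2.+1)%N.
Proof.
case: c => p k; rewrite /cstep; case: eqP => [->|_].
  by case: (delta0 A p a) => p' [].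
by case: (delta1 A p a) => p' [] /=; lia.
Qed.

Lemma cstep_shift p k d a : (d < k)%N ->
  cstep (p, (k - d)%N) a = ((cstep (p, k) a).1, ((cstep (p, k) a).2 - d)%N)
  /\ cm (p, (k - d)%N) a = cm (p, k) a.
Proof.
move=> dk; rewrite /cstep /cm /=.
have -> : (k - d == 0)%N = false by apply/eqP; lia.
have -> : (k == 0)%N = false by apply/eqP; lia.
split=> //.
by case: (delta1 A p a) => p' [] /=; congr pair; lia.
Qed.

Lemma shift w p k d :
  (forall i, (i <= size w)%N -> (d < (crun (p, k) (take i w)).2)%N) ->
  cmat (p, (k - d)%N) w = cmat (p, k) w /\
  crun (p, (k - d)%N) w = ((crun (p, k) w).1, ((crun (p, k) w).2 - d)%N).
Proof.
elim: w p k => [|a w IH] p k H; first by [].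
rewrite !cmat_cons !crun_cons.
have dk : (d < k)%N by have := H 0%N isT.
have [E1 E2] := cstep_shift p a dk.
rewrite E1 E2.
case E: (cstep (p, k) a) => [p' k'].
have H' : forall i, (i <= size w)%N -> (d < (crun (p', k') (take i w)).2)%N.
  move=> i Hi; have := H i.+1 Hi.
  by have -> : crun (p, k) (take i.+1 (a :: w)) = crun (p', k') (take i w) by rewrite -E.
have [IH1 IH2] := IH p' k' H'.
by rewrite IH1 IH2.
Qed.

End Ctl.

Section Main.
Local Open Scope ring_scope.
Local Open Scope nat_scope.
Variables (F : fieldType) (Sigma C : finType) (q : nat) (A : wODCA F Sigma C q).

Lemma main_bound (Hq : 0 < q) x p n (V : {vspace 'rV[F]_q}) (S : {set C}) z :
  minimal_witness A (x, p, n) V S predT z ->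
  size z <= (q * #|C|) * (maxn n (q * #|C|) + (q * #|C|) ^ 2).
Proof.
move=> [Hw Hmin].
set m := size z. set c0 := (p, n).
pose ctl i := crun A c0 (take i z).
pose cnt i := (ctl i).2.
pose X i := (x *m cmat A c0 (take i z))%R.
pose R i := cmat A (ctl i) (drop i z).
have witE : forall w, witness A (x, p, n) V S predT w <->
    ((x *m cmat A c0 w)%R \notin V /\ (crun A c0 w).1 \in S).
  by move=> w; rewrite /witness run_split; split => [[]|[]].
have [Hfin HfinS] := (witE z).1 Hw.
have Hsh : forall w, size w < m -> (crun A c0 w).1 \in S -> (x *m cmat A c0 w)%R \in V.
  move=> w lt inS; apply/negPn/negP => nin; apply: (Hmin w lt); exact/witE.
have D1 : forall i, (X i *m R i = x *m cmat A c0 z)%R.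
  by move=> i; rewrite /X /R /ctl -mulmxA -cmat_cat cat_take_drop.
have D2 : forall i, crun A (ctl i) (drop i z) = crun A c0 z.
  by move=> i; rewrite /ctl -crun_cat cat_take_drop.
have Hstep : forall i, i < m -> cnt i.+1 <= (cnt i).+1 /\ cnt i <= (cnt i.+1).+1.
  move=> i im.
  have : 0 < size (drop i z) by rewrite size_drop; lia.
  case E: (drop i z) => [|a t] // _.
  have -> : cnt i.+1 = (cstep A (ctl i) a).2.
    by rewrite /cnt /ctl -addn1 takeD E /= take0 crun_cat.
  exact: cstep_bound.
have Hcnt0 : cnt 0 = n by rewrite /cnt /ctl take0.
have A1 : forall i j, i < j -> j <= m -> ctl i = ctl j -> (X i *m R j)%R \in V.
  move=> i j ij jm E.
  have := Hsh (take i z ++ drop j z).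
  rewrite size_cat size_drop size_takel; last by rewrite -/m; lia.
  rewrite crun_cat cmat_cat -/(ctl i) E D2 mulmxA; apply => //; lia.
have [s [sm Hs]] := argmax_ex cnt m.
set H := cnt s.
have ctlE : forall i, ctl i = ((ctl i).1, cnt i) by move=> i; rewrite /cnt; case: (ctl i).
have B1 : m.+1 <= #|C| * H.+1 * (1 * q).
  have := @CL _ (fun i => ((ctl i).1, inord (cnt i) : 'I_H.+1)) (iota 0 m.+1) (1 * q).
  rewrite size_iota card_prod card_ord; apply => k.
  set f := filter _ _.
  have memf : forall i, i \in f -> i <= m /\ ((ctl i).1, inord (cnt i) : 'I_H.+1) = k.
    by move=> i; rewrite mem_filter mem_iota => /andP [/eqP -> /andP [_ ]]; rewrite add0n ltnS.
  rewrite -size_rev.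
  apply: (@GL F 1 q q V (fun i j => j < i) _ (fun _ => 1%:M)%R X R).
  - by move=> a b c /=; lia.
  - rewrite rev_sorted; apply: sorted_filter; [exact: ltn_trans | exact: iota_ltn_sorted].
  - move=> i j; rewrite !mem_rev => /memf [im ki] /memf [jm kj] ji.
    rewrite mul1mx; apply: A1 => //.
    rewrite [ctl i]ctlE [ctl j]ctlE; move: kj; rewrite -ki => /eqP; rewrite xpair_eqE.
    case/andP => /eqP -> /eqP /(congr1 val) /=; rewrite !inordK ?ltnS ?Hs //.
    by move=> ->.
  - by move=> i _; rewrite mul1mx D1.
pose a h := s - fst (fun k => cnt (s - k) <= h) s.
pose b h := s + fst (fun k => (cnt (s + k) <= h) || (s + k == m)) (m - s).
have Ha : forall h, n <= h -> h <= H ->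
    [/\ a h <= s, cnt (a h) = h & forall j, a h <= j <= s -> h <= cnt j].
  move=> h nh hH.
  have PN : cnt (s - s) <= h by rewrite subnn Hcnt0.
  have [kle Pk bef] := @fstP (fun k => cnt (s - k) <= h) s PN.
  have gt : forall j, a h < j <= s -> h < cnt j.
    move=> j /andP [j1 j2].
    rewrite /a in j1.
    have hlt : s - j < fst (fun k => cnt (s - k) <= h) s by lia.
    have := bef _ hlt; rewrite /= (_ : s - (s - j) = j); last by lia.
    by rewrite ltnNge.
  have eqh : cnt (a h) = h.
    apply/eqP; rewrite eqn_leq Pk /=.
    case: (ltnP (a h) s) => lt.
      have := gt (a h).+1; rewrite lt ltnSn => /(_ isT) h1.
      have [h2 _] := Hstep (a h) (leq_trans lt sm); lia.
    by rewrite (_ : a h = s) //; rewrite /a in lt *; lia.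
  split => //; first by rewrite /a leq_subr.
  move=> j /andP [j1 j2]; case: (ltnP (a h) j) => lt; first by apply: ltnW; apply: gt; rewrite lt.
  by rewrite (_ : j = a h) ?eqh //; lia.
have Hb : forall h, n <= h -> h <= H ->
    [/\ s <= b h, b h <= m, forall j, s <= j <= b h -> h <= cnt j & (b h != m -> cnt (b h) = h)].
  move=> h nh hH.
  have PN : (cnt (s + (m - s)) <= h) || (s + (m - s) == m) by rewrite subnKC // eqxx orbT.
  have [kle Pk bef] := @fstP (fun k => (cnt (s + k) <= h) || (s + k == m)) (m - s) PN.
  have gt : forall j, s <= j < b h -> h < cnt j /\ j != m.
    move=> j /andP [j1 j2].
    rewrite /b in j2.
    have hlt : j - s < fst (fun k => (cnt (s + k) <= h) || (s + k == m)) (m - s) by lia.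
    have := bef _ hlt; rewrite /= (_ : s + (j - s) = j); last by lia.
    by rewrite negb_or ltnNge => /andP [].
  have geh : cnt (b h) <= h -> cnt (b h) = h.
    move=> le; apply/eqP; rewrite eqn_leq le /=.
    case: (ltnP s (b h)) => lt.
      have hh : s <= (b h).-1 < b h by lia.
      have [g1 g2] := gt (b h).-1 hh.
      have hm : (b h).-1 < m by rewrite /b in g2 *; lia.
      have [_ h2] := Hstep (b h).-1 hm.
      by rewrite prednK in h2; lia.
    by rewrite (_ : b h = s) //; rewrite /b in lt *; lia.
  split.
  - by rewrite /b leq_addr.
  - by rewrite /b; lia.
  - move=> j /andP [j1 j2]; case: (ltnP j (b h)) => lt; first by apply: ltnW; have [] := gt j; [rewrite j1 lt|].
    have ej : j = b h by lia.
    rewrite ej; case: (leqP (cnt (b h)) h) => c; first by rewrite geh.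
    exact: ltnW.
  - by move=> ne; apply: geh; move: Pk; rewrite -/(b h); case/orP => //; rewrite (negbTE ne).
pose base := if n == 0 then 1 else n.
have range : forall h, base <= h -> n <= h /\ 0 < h.
  by move=> h; rewrite /base; case: eqP => [->|]; lia.
have Hab : forall h, n <= h -> h <= H ->
    [/\ a h <= b h, b h <= m & forall j, a h <= j <= b h -> h <= cnt j].
  move=> h nh hH; have [a1 ca ga] := Ha h nh hH; have [b1 b2 gb cb] := Hb h nh hH.
  split; first by lia. by [].
  move=> j /andP [j1 j2]; case: (leqP j s) => js; first by apply: ga; rewrite j1 js.
  by apply: gb; rewrite j2 ltnW.
have mono : forall h h', n <= h -> h < h' -> h' <= H -> a h < a h' /\ b h' <= b h.
  move=> h h' nh hh' hH.
  have h'H : h <= H by lia.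
  have nh' : n <= h' by lia.
  have [a1 ca ga] := Ha h nh h'H; have [a1' ca' ga'] := Ha h' nh' hH.
  have [b1 b2 gb cb] := Hb h nh h'H; have [b1' b2' gb' cb'] := Hb h' nh' hH.
  split.
    case: (ltnP (a h) (a h')) => // le.
    by have := ga' (a h); rewrite le a1 ca => /(_ isT); lia.
  case: (leqP (b h') (b h)) => // lt.
  have := gb' (b h); rewrite b1 ltnW // => /(_ isT).
  have ne : b h != m by apply/eqP; lia.
  by rewrite cb //; lia.
pose mid h := take (b h - a h) (drop (a h) z).
pose M h := cmat A (ctl (a h)) (mid h).
have midE : forall h, a h <= b h -> take (b h) z = take (a h) z ++ mid h.
  by move=> h le; rewrite -takeD subnKC.
have XM : forall h, a h <= b h ->
    (X (a h) *m M h = X (b h))%R /\ crun A (ctl (a h)) (mid h) = ctl (b h).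
  by move=> h le; rewrite /X /M /ctl midE // cmat_cat crun_cat mulmxA.
have midC : forall h i, a h + i <= b h -> crun A (ctl (a h)) (take i (mid h)) = ctl (a h + i).
  move=> h i le; rewrite /mid take_takel; last by lia.
  by rewrite /ctl takeD crun_cat.
have sizemid : forall h, a h <= b h -> b h <= m -> size (mid h) = b h - a h.
  by move=> h l1 l2; rewrite /mid size_takel // size_drop; lia.
have A2 : forall h h', base <= h -> h < h' -> h' <= H ->
    (ctl (a h)).1 = (ctl (a h')).1 -> (ctl (b h)).1 = (ctl (b h')).1 ->
    (X (a h) *m M h' *m R (b h))%R \in V.
  move=> h h' bh hh' hH Ka Kb.
  have [nh h0] := range h bh.
  have h'H : h <= H by lia.
  have nh' : n <= h' by lia.
  have [a1 ca ga] := Ha h nh h'H; have [a1' ca' ga'] := Ha h' nh' hH.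
  have [b1 b2 gb cb] := Hb h nh h'H; have [b1' b2' gb' cb'] := Hb h' nh' hH.
  have [ab bm gab] := Hab h nh h'H; have [ab' bm' gab'] := Hab h' nh' hH.
  have [mo1 mo2] := mono h h' nh hh' hH.
  have [XM1 XM2] := XM h' ab'.
  set d := h' - h.
  have Ea : ctl (a h) = ((ctl (a h')).1, h' - d).
    by rewrite ctlE ca Ka; congr pair; rewrite /d; lia.
  have Ea' : ctl (a h') = ((ctl (a h')).1, h') by rewrite ctlE ca'.
  have Hsh' : forall i, i <= size (mid h') ->
      d < (crun A ((ctl (a h')).1, h') (take i (mid h'))).2.
    move=> i Hi; rewrite sizemid // in Hi.
    have le : a h' + i <= b h' by lia.
    rewrite -Ea' midC //.
    have := gab' (a h' + i); rewrite le leq_addr => /(_ isT); rewrite /d /cnt; lia.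
  have [Sh1 Sh2] := shift Hsh'.
  have Sh1' : cmat A (ctl (a h)) (mid h') = M h' by rewrite Ea Sh1 -Ea'.
  have Sh2' : crun A (ctl (a h)) (mid h') = ((ctl (b h')).1, cnt (b h') - d).
    by rewrite Ea Sh2 -Ea' XM2.
  have Hw2 := Hsh (take (a h) z ++ mid h' ++ drop (b h) z).
  rewrite !size_cat size_takel ?sizemid ?size_drop // in Hw2; last by lia.
  rewrite !crun_cat !cmat_cat -/(ctl (a h)) Sh2' in Hw2.
  rewrite Sh1' in Hw2.
  have Hlt : a h + (b h' - a h' + (m - b h)) < m by lia.
  have Ecase : ((ctl (b h')).1, cnt (b h') - d) = ctl (b h) \/ drop (b h) z = [::].
    case: (eqVneq (b h) m) => e; first by right; rewrite e drop_size.
    left; have ne' : b h' != m by apply/eqP; lia.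
    by rewrite [ctl (b h)]ctlE cb // cb' // Kb /d; congr pair; lia.
  case: Ecase => [Ec|Ed].
    rewrite Ec D2 in Hw2; have := Hw2 Hlt HfinS.
    by rewrite /X /R !mulmxA.
  have := D2 (b h); rewrite Ed => Dn.
  rewrite Ed in Hw2; rewrite /R Ed /= mulmx1.
  have := Hw2 Hlt; rewrite /= mulmx1 mulmxA; apply.
  by rewrite -Kb; move: HfinS; rewrite -Dn.
have B2 : H.+1 - base <= #|C| * #|C| * (q * q).
  have := @CL _ (fun h => ((ctl (a h)).1, (ctl (b h)).1)) (iota base (H.+1 - base)) (q * q).
  rewrite size_iota card_prod; apply => k.
  set f := filter _ _.
  have memf : forall i, i \in f ->
      [/\ base <= i, i <= H & ((ctl (a i)).1, (ctl (b i)).1) = k].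
    move=> i; rewrite mem_filter mem_iota => /andP [/eqP -> /andP [i1 i2]].
    by split => //; lia.
  apply: (@GL F q q q V ltn ltn_trans (fun h => X (a h)) M (fun h => R (b h))).
  - by apply: sorted_filter; [exact: ltn_trans | exact: iota_ltn_sorted].
  - move=> i j /memf [bi iH ki] /memf [bj jH kj] ij.
    move: kj; rewrite -ki => /eqP; rewrite xpair_eqE => /andP [/eqP e1 /eqP e2].
    by apply: A2 => //.
  - move=> i /memf [bi iH _].
    have [ni _] := range i bi.
    have [ab _ _] := Hab i ni iH.
    by have [-> _] := XM i ab; rewrite D1.
have K1 : 0 < #|C| by apply/card_gt0P; exists p.
have baseK : base <= maxn n (q * #|C|).
  rewrite /base; case: eqP => _; last exact: leq_maxl.
  by apply: leq_trans (leq_maxr _ _); rewrite muln_gt0 Hq K1.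
set K := q * #|C| in baseK *.
have HY : H.+1 <= maxn n K + K ^ 2.
  have : #|C| * #|C| * (q * q) = K ^ 2 by rewrite /K; ring.
  by lia.
have : #|C| * H.+1 * (1 * q) = K * H.+1 by rewrite /K; ring.
move=> E1; rewrite E1 in B1.
have := leq_mul (leqnn K) HY; lia.
Qed.
End Main.

Theorem mainTheorem14 (F : fieldType) (Sigma C : finType) (q : nat)
  (Hq : (0 < q)%N) (A : wODCA F Sigma C q)
  (x : 'rV[F]_q) (p : C) (n : nat)
  (V : {vspace 'rV[F]_q}) (S : {set C}) (z : seq Sigma) :
  minimal_witness A (x, p, n) V S predT z ->
  let K := (q * #|C|)%N in
  (size z <= K * (maxn n K + K ^ 2))%N.
Proof.
move=> Hm; exact: (main_bound Hq Hm).
Qed.
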